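(* Let $w,x,y,z$ be nodes of a median graph and $B=\big((I_{yw}\cap I_{xw})\cup(I_{yw}\cap I_{zw})\big)\setminus\{w\}$. Then $B=\emptyset$ if and only if $w\in I_{y\,m(x,y,z)}$.
   Context: $G$ is a finite connected unweighted undirected median graph: with shortest-path distance $d$ and $I_{ab}=\{v:d(a,v)+d(v,b)=d(a,b)\}$, $\lvert I_{ab}\cap I_{ac}\cap I_{bc}\rvert=1$ for all nodes $a,b,c$, and $m(a,b,c)$ denotes that unique node. (In the paper, $B$ is the set of bargaining points of participant $y$ when the current winner is $w$ and the other group members are $x,z$.) *)

(* Defs.v *)
From mathcomp Require Import all_boot.
Set Implicit Arguments. Unset Strict Implicit. Unset Printing Implicit Defensive.

Definition simple_graph (T : finType) (e : rel T) : Prop :=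
  irreflexive e /\ symmetric e.

Definition ball (T : finType) (e : rel T) (a : T) (n : nat) : {set T} :=
  iter n (fun S => S :|: [set y | [exists x in S, e x y]]) [set a].

Definition connected_graph (T : finType) (e : rel T) : Prop :=
  forall a b : T, connect e a b.

(* shortest-path distance: least n with b within n steps of a
   (correct whenever b is reachable from a; connected graphs have
   distances < #|T|) *)
Definition dist (T : finType) (e : rel T) (a b : T) : nat :=
  find (fun n => b \in ball e a n) (iota 0 #|T|).

Definition interval (T : finType) (e : rel T) (a b : T) : {set T} :=
  [set v | dist e a v + dist e v b == dist e a b].

Definition median_graph (T : finType) (e : rel T) : Prop :=
  simple_graph e /\ connected_graph e /\
  forall a b c : T,
    #|interval e a b :&: interval e a c :&: interval e b c| = 1.

(* the median m(a,b,c): the unique element of the triple intersection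
   (in a median graph); defaults to a otherwise *)
Definition median (T : finType) (e : rel T) (a b c : T) : T :=
  odflt a [pick v in interval e a b :&: interval e a c :&: interval e b c].

(* Main.v *)
Require Import Defs.
From mathcomp Require Import all_boot.
From mathcomp Require Import zify.

Section G.
Variables (T : finType) (e : rel T).

Lemma ballS a n : ball e a n.+1 = ball e a n :|: [set y | [exists x in ball e a n, e x y]].
Proof. by []. Qed.

Lemma ball0 a : ball e a 0 = [set a].
Proof. by []. Qed.

Lemma ball_trans a b c n m : b \in ball e a n -> c \in ball e b m -> c \in ball e a (n + m).
Proof.
move=> Hb; elim: m c => [|m IH] c.
  by rewrite ball0 inE addn0 => /eqP ->.
rewrite addnS !ballS !inE => /orP [/IH -> //| /existsP [x /andP [Hx Hxc]]].
apply/orP; right; apply/existsP; exists x; by rewrite (IH _ Hx) Hxc.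
Qed.

Lemma ball1 a b : e a b -> b \in ball e a 1.
Proof.
move=> H; rewrite ballS ball0 !inE; apply/orP; right; apply/existsP; exists a.
by rewrite inE eqxx.
Qed.

Lemma ball_sym (esym : symmetric e) a b n : b \in ball e a n -> a \in ball e b n.
Proof.
elim: n b => [|n IH] b.
  by rewrite ball0 inE => /eqP ->; rewrite ball0 inE.
move=> H0; rewrite ballS !inE in H0.
case/orP: H0 => [/IH H | /existsP [x /andP [Hx Hxb]]].
  by rewrite ballS inE H.
have Hxb' : x \in ball e b 1 by apply: ball1; rewrite esym.
by rewrite -add1n; apply: ball_trans Hxb' (IH _ Hx).
Qed.

Lemma path_ball a p : path e a p -> last a p \in ball e a (size p).
Proof.
elim: p a => [|y p IH] a /=.
  by rewrite ?ball0 inE.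
move=> /andP [Hay Hp].
by have := ball_trans _ _ _ _ _ (ball1 _ _ Hay) (IH _ Hp); rewrite add1n.
Qed.

Lemma reach a b : connect e a b -> exists2 n, n < #|T| & b \in ball e a n.
Proof.
move=> /connectP [p Hp ->].
case/shortenP: Hp => p' Hp' Hu _.
exists (size p'); last exact: path_ball.
change (size (a :: p') <= #|T|); rewrite -(card_uniqP Hu); exact: max_card.
Qed.

Lemma dist_le a b n : b \in ball e a n -> dist e a b <= n.
Proof.
move=> H; rewrite /dist.
case: (leqP #|T| n) => Hn.
  apply: leq_trans Hn; rewrite -[X in _ <= X](size_iota 0 #|T|); exact: find_size.
rewrite leqNgt; apply/negP => Hlt.
have := before_find 0 Hlt. by rewrite nth_iota // add0n H.
Qed.

Lemma dist_ball a b : connect e a b -> b \in ball e a (dist e a b).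
Proof.
move=> /reach [n Hn Hb].
have Hh : has (fun k => b \in ball e a k) (iota 0 #|T|).
  by apply/hasP; exists n => //; rewrite mem_iota.
have := nth_find 0 Hh; rewrite nth_iota //.
  by move: Hh; rewrite has_find size_iota.
Qed.

End G.
Arguments ball_trans {T e a b c n m}.
Arguments ball_sym {T e} esym {a b n}.
Arguments dist_le {T e a b n}.
Arguments dist_ball {T e a b}.

Theorem lemmaI7 (T : finType) (e : rel T) (w x y z : T) :
  median_graph e ->
  ((interval e y w :&: interval e x w) :|: (interval e y w :&: interval e z w))
     :\ w = set0
  <-> w \in interval e y (median e x y z).
Proof.
case=> [[irr esym] [conn Hmed]].
have dsym : forall a b, dist e a b = dist e b a.
  move=> a b; apply/eqP; rewrite eqn_leq; apply/andP; split; apply: dist_le;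
  apply: (ball_sym esym); exact: dist_ball.
have dtri : forall a b c, dist e a c <= dist e a b + dist e b c.
  move=> a b c; apply: dist_le; apply: ball_trans; exact: dist_ball.
have d0 : forall a b, dist e a b = 0 -> a = b.
  move=> a b H; have := dist_ball (conn a b); rewrite H ball0 inE => /eqP ->//.
have medP : forall a b c, let v := median e a b c in
   [/\ dist e a v + dist e v b = dist e a b, dist e a v + dist e v c = dist e a c
     & dist e b v + dist e v c = dist e b c].
  move=> a b c v.
  have : v \in interval e a b :&: interval e a c :&: interval e b c.
    rewrite /v /median; case: pickP => [u Hu|H] //=.
    by have := Hmed a b c; rewrite (eq_card0 H).
  by rewrite !inE => /andP [/andP [/eqP H1 /eqP H2] /eqP H3].
have medU : forall a b c v, v \in interval e a b :&: interval e a c :&: interval e b c ->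
   v = median e a b c.
  move=> a b c v Hv.
  have Hm : median e a b c \in interval e a b :&: interval e a c :&: interval e b c.
    have [H1 H2 H3] := medP a b c; by rewrite !inE H1 H2 H3 !eqxx.
  have /eqP/cards1P [u Hu] := Hmed a b c.
  by move: Hv Hm; rewrite Hu !inE => /eqP -> /eqP ->.
split.
- move=> HB.
  have key : forall t u, t \in [:: x; z] -> u \in interval e y w ->
      u \in interval e t w -> u = w.
    move=> t u Ht Hy Hu; apply/eqP; apply/negPn/negP => Hne.
    have : u \in (set0 : {set T}).
      rewrite -HB in_setD1 Hne in_setU !in_setI Hy /=.
      by rewrite !inE in Ht; case/orP: Ht => /eqP Ht; subst t; rewrite Hu ?orbT.
    by rewrite inE.
  have [a1 a2 a3] := medP y w x.
  have Hu1 := key x (median e y w x) (mem_head _ _).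
  have Hu1' : median e y w x = w.
    apply: Hu1; rewrite inE; apply/eqP => //.
    move: (dsym x (median e y w x)) (dsym w (median e y w x)) (dsym x w); lia.
  have [b1 b2 b3] := medP y w z.
  have Hu2 : median e y w z = w.
    apply: (key z); first by rewrite !inE eqxx orbT.
      by rewrite inE; apply/eqP.
    rewrite inE; apply/eqP.
    move: (dsym z (median e y w z)) (dsym w (median e y w z)) (dsym z w); lia.
  rewrite Hu1' in a1 a2 a3; rewrite Hu2 in b1 b2 b3.
  have [c1 c2 c3] := medP w x z.
  set c := median e w x z in c1 c2 c3.
  have Hc : c = median e x y z.
    apply: medU; rewrite !inE; apply/andP; split; [apply/andP; split|]; apply/eqP;
    move: (dtri y w c) (dtri y c x) (dtri y c z) (dsym c y) (dsym x y) (dsym y x)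
          (dsym w y) (dsym x c) (dsym z c) (dsym x w) (dsym z w) (dsym w c); lia.
  rewrite -Hc inE; apply/eqP.
  move: (dtri y w c) (dtri y c x) (dsym x c) (dsym x w) (dsym w x); lia.
- move=> Hw.
  have [m1 m2 m3] := medP x y z.
  set m := median e x y z in Hw m1 m2 m3.
  rewrite inE in Hw; move/eqP: Hw => Hw.
  apply/setP => v; rewrite in_set0 in_setD1 in_setU !in_setI.
  case: (eqVneq v w) => [->|Hne] //=.
  apply/negbTE/negP; case/orP => /andP [H1 H2]; rewrite !inE in H1 H2;
    move/eqP: H1 => H1; move/eqP: H2 => H2.
  + have : dist e v w = 0.
      move: (dtri y v x) (dtri w m x) (dsym v x) (dsym w x) (dsym y x)
            (dsym m x) (dsym m y) (dsym w v); lia.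
    by move/d0 => E; rewrite E eqxx in Hne.
  + have : dist e v w = 0.
      move: (dtri y v z) (dtri w m z) (dsym v z) (dsym w z) (dsym m y)
            (dsym w v); lia.
    by move/d0 => E; rewrite E eqxx in Hne.
Qed.
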